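(* Let $G=(V,E)$ be a computation graph whose vertices $v$ carry local types $\mathcal T_v$, and such that for each non-source vertex $v$ the associated function $f_v:\prod_{(u,v)\in E}\mathcal T_u\to\mathcal T_v$ is representable in $\mathrm{ResMLP}(d_v,L_v)$; for a source vertex $v$ put $d_v=d_{\mathcal T_v}$ and $L_v=0$. Then the function induced by $G$, from the product of the types of the source vertices to the product of the types of the sink vertices, is representable in $\mathrm{ResMLP}\big(\sum_{v\in V}d_v,\ \mathrm{depth}(G)\,(\max_{v\in V}L_v+1)+1\big)$.
   Context: A local type $\mathcal T$ is a finite set $S$ with an injective encoding $\phi_{\mathcal T}:S\to\mathbb{R}^{d_{\mathcal T}}$; product types are encoded by concatenation. A computation graph is a finite directed acyclic graph $G=(V,E)$ where each vertex $v$ has a local type $\mathcal T_v$ and each vertex with at least one incoming edge has a function $f_v$ from the product (in a fixed order) of the types of its in-neighbours to $\mathcal T_v$. Source vertices have no incoming edges, sink vertices no outgoing edges. The induced function assigns the inputs to the sources and, once all in-neighbours of $v$ have values $x_{u}$, assigns $v$ the value $f_v((x_u)_u)$; its output is the tuple of values at the sinks. $\mathrm{depth}(G)$ is the number of edges of a longest directed path in $G$. A single-layer fully connected network of dimension $d$ is $f_{\mathrm{fcn}}(X)=W_2\,\mathrm{ReLU}(W_1X+B_1)+B_2$ with $W_1\in\mathbb{R}^{4d\times d}$, $B_1\in\mathbb{R}^{4d}$, $W_2\in\mathbb{R}^{d\times 4d}$, $B_2\in\mathbb{R}^d$. $\mathrm{ResMLP}(d,L)$ is the set of maps $X\mapsto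 X^{(L)}$ with $X^{(0)}=X$, $X^{(l)}=X^{(l-1)}+f^{(l)}_{\mathrm{fcn}}(X^{(l-1)})$. A function $f:\mathcal A\to\mathcal B$ between local types is representable in $\mathrm{ResMLP}(d,L)$ (with $d\ge\max(d_{\mathcal A},d_{\mathcal B})$) if there is $\tilde f\in\mathrm{ResMLP}(d,L)$ with $\iota_1\circ\phi_{\mathcal B}\circ f=\tilde f\circ\iota_2\circ\phi_{\mathcal A}$, where $\iota_1,\iota_2$ pad with zeros into $\mathbb{R}^d$. *)

(* Defs.v *)
From HB Require Import structures.
From mathcomp Require Import all_boot all_order all_algebra.
From mathcomp Require Import reals.
Set Implicit Arguments. Unset Strict Implicit. Unset Printing Implicit Defensive.
Import Order.TTheory GRing.Theory Num.Theory.
Local Open Scope ring_scope.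

Section Defs.
Variable R : realType.

Record LocalType := {
  lt_car : finType;
  lt_dim : nat;
  lt_enc : lt_car -> 'cV[R]_lt_dim;
  lt_enc_inj : injective lt_enc }.

Definition pad (d n : nat) (v : 'cV[R]_n) : 'cV[R]_d :=
  \col_(i < d) (match (insub (val i) : option 'I_n) with
                | Some j => v j 0 | None => 0 end).

Definition relu (d : nat) (X : 'cV[R]_d) : 'cV[R]_d := map_mx (fun x => Num.max x 0) X.

Record FCN (d : nat) := {
  W1 : 'M[R]_(4 * d, d);
  B1 : 'cV[R]_(4 * d);
  W2 : 'M[R]_(d, 4 * d);
  B2 : 'cV[R]_d }.

Definition fcn (d : nat) (p : FCN d) (X : 'cV[R]_d) : 'cV[R]_d :=
  W2 p *m relu (W1 p *m X + B1 p) + B2 p.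

Definition resmlp (d : nat) (ls : seq (FCN d)) (X : 'cV[R]_d) : 'cV[R]_d :=
  foldl (fun Y p => Y + fcn p Y) X ls.

Definition ResMLP (d L : nat) (g : 'cV[R]_d -> 'cV[R]_d) : Prop :=
  exists ls : seq (FCN d), size ls = L /\ forall X, g X = resmlp ls X.

Definition representable (X : Type) (P : X -> Prop) (dA dB : nat)
    (encA : X -> 'cV[R]_dA) (encB : X -> 'cV[R]_dB) (d L : nat) : Prop :=
  (dA <= d)%N /\ (dB <= d)%N /\
  exists g : 'cV[R]_d -> 'cV[R]_d, @ResMLP d L g /\
    forall x, P x -> pad d (encB x) = g (pad d (encA x)).

(* The graph on V is given by the ordered lists of in-neighbours preds v;
   the edge (u,v) is present iff u \in preds v. *)
Section Graph.
Variable V : finType.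
Variable preds : V -> seq V.

Definition edge : rel V := fun u v => u \in preds v.

Definition acyclic : Prop := forall u v, edge u v -> ~~ connect edge v u.

Definition is_source (v : V) : bool := preds v == [::].
Definition is_sink (v : V) : bool := [forall w, v \notin preds w].

(* longest directed path: number of edges; path x t has size t edges.
   In a DAG every path has < #|V| edges. *)
Definition depth : nat :=
  \max_(n < #|V|.+1 | [exists x : V, [exists t : n.-tuple V, path edge x t]]) n.

Variable T : V -> LocalType.

Fixpoint dims (s : seq V) : nat :=
  match s with [::] => 0%N | u :: s' => (lt_dim (T u) + dims s')%N end.

Fixpoint encs (s : seq V) (x : forall u, lt_car (T u)) : 'cV[R]_(dims s) :=
  match s return 'cV[R]_(dims s) with
  | [::] => 0
  | u :: s' => col_mx (lt_enc (x u)) (encs s' x)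
  end.

Definition local (v : V) (g : (forall u, lt_car (T u)) -> lt_car (T v)) : Prop :=
  forall x y, (forall u, u \in preds v -> x u = y u) -> g x = g y.

(* a full assignment of values consistent with the graph functions:
   exactly the assignments produced by the induced function from
   their source values *)
Definition run (f : forall v, (forall u, lt_car (T u)) -> lt_car (T v))
    (a : forall u, lt_car (T u)) : Prop :=
  forall v, ~~ is_source v -> a v = f v a.

End Graph.
End Defs.

(* Main.v *)
Require Import Defs.
From HB Require Import structures.
From mathcomp Require Import all_boot all_order all_algebra lra zify.
From mathcomp Require Import reals.
From Stdlib Require Import ClassicalEpsilon.
Import Order.TTheory GRing.Theory Num.Theory.
Local Open Scope ring_scope.
Set Implicit Arguments. Unset Strict Implicit.

Section Gen.
Variable R : realType.

Definition getc n (v : 'cV[R]_n) (k : nat) : R :=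
  match (insub k : option 'I_n) with Some j => v j 0 | None => 0 end.

Lemma padE d n (v : 'cV[R]_n) i : pad d v i 0 = getc v (val i).
Proof. by rewrite mxE. Qed.

Lemma getc_pad d n (v : 'cV[R]_n) k : (n <= d)%N -> getc (pad d v) k = getc v k.
Proof.
move=> nd; rewrite /getc; case: insubP => [j kd <-|kd]; first by rewrite padE.
case: insubP => // j _ kn; move: kd; rewrite -kn.
by have := leq_trans (ltn_ord j) nd => ->.
Qed.

Lemma getc0 n k : getc (0 : 'cV[R]_n) k = 0.
Proof. by rewrite /getc; case: insubP => // j _ _; rewrite mxE. Qed.

Lemma sum_getc n (Y : 'cV[R]_n) k :
  \sum_(j : 'I_n) (if val j == k then Y j 0 else 0) = getc Y k.
Proof.
rewrite /getc; case: insubP => [j0 _ <-|kn].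
  rewrite (bigD1 j0) //= eqxx big1 ?addr0 // => j ne.
  by rewrite val_eqE (negbTE ne).
apply: big1 => j _; case: eqP => // jk; move: kn; by rewrite -jk ltn_ord.
Qed.

Lemma maxE (x : R) : Num.max x 0 - Num.max (- x) 0 = x.
Proof.
rewrite /Order.max; case: ifP => h1; case: ifP => h2; move: h1 h2; lra.
Qed.

End Gen.
Section G2.
Variable R : realType.
Lemma getc_col_mx m n (A : 'cV[R]_m) (B : 'cV[R]_n) k :
  getc (col_mx A B) k = if (k < m)%N then getc A k else getc B (k - m).
Proof.
rewrite /getc; case: ifP => km.
  case: (insubP _ k) => [j _ jk|]; last by rewrite (ltn_addr _ km).
  case: (insubP _ k) => [j' _ jk'|]; last by rewrite km.
  have -> : j = lshift n j' by apply: val_inj; rewrite /= jk jk'.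
  by rewrite col_mxEu.
have mk : (m <= k)%N by rewrite leqNgt km.
case: (insubP _ k) => [j _ jk|kmn].
  case: (insubP _ (k - m)%N) => [j' _ jk'|].
    have -> : j = rshift m j' by apply: val_inj; rewrite /= jk jk' subnKC.
    by rewrite col_mxEd.
  by rewrite ltn_subLR // -jk ltn_ord.
case: (insubP _ (k - m)%N) => // j' _ jk'.
move: kmn; rewrite -(subnKC mk) -jk' ltn_add2l ltn_ord //.
Qed.
End G2.
Section Enc.
Variable R : realType.
Variable V : finType.
Variable T : V -> LocalType R.

Fixpoint posn (s : seq V) (u : V) (i : nat) : nat :=
  match s with [::] => 0%N | w :: s' => if w == u then i else (lt_dim (T w) + posn s' u i)%N end.

Fixpoint unpos (s : seq V) (k : nat) : option (V * nat) :=
  match s with [::] => None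
  | w :: s' => if (k < lt_dim (T w))%N then Some (w, k) else unpos s' (k - lt_dim (T w))%N end.

Lemma getc_encs_posn s a u i : u \in s -> (i < lt_dim (T u))%N ->
  getc (@encs R V T s a) (posn s u i) = getc (lt_enc (a u)) i.
Proof.
elim: s => //= w s IH; rewrite inE => /orP [/eqP <-|us] iu.
  by rewrite eqxx getc_col_mx iu.
case: eqP => [wu|wu]; first by subst; rewrite getc_col_mx iu.
by rewrite getc_col_mx ltnNge leq_addr /= addKn IH.
Qed.

Lemma getc_encs_unpos s a k :
  getc (@encs R V T s a) k =
  match unpos s k with Some (u, j) => getc (lt_enc (a u)) j | None => 0 end.
Proof.
elim: s k => [|w s IH] k /=; first by rewrite getc0.
by rewrite getc_col_mx; case: ifP.
Qed.

Lemma unpos_mem s k u j : unpos s k = Some (u, j) -> u \in s.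
Proof.
elim: s k => //= w s IH k; case: ifP => _ [].
  by move=> <- _; rewrite inE eqxx.
by move=> /IH; rewrite inE orbC => ->.
Qed.

Lemma dims_sum s : dims T s = \sum_(u <- s) lt_dim (T u).
Proof. by elim: s => [|w s IH] /=; rewrite ?big_nil ?big_cons ?IH. Qed.
End Enc.
Section MkFCN.
Variable R : realType.
Variable D : nat.
Variables (S H : finType) (eS : #|S| = D) (eH : #|H| = (4 * D)%N).

Definition sI (s : S) : 'I_D := cast_ord eS (enum_rank s).
Definition sJ (i : 'I_D) : S := enum_val (cast_ord (esym eS) i).
Definition hJ (i : 'I_(4 * D)) : H := enum_val (cast_ord (esym eH) i).

Lemma sIK : cancel sI sJ.
Proof. by move=> s; rewrite /sI /sJ cast_ordK enum_rankK. Qed.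
Lemma sJK : cancel sJ sI.
Proof. by move=> i; rewrite /sI /sJ enum_valK cast_ordKV. Qed.
Lemma hJ_bij : bijective hJ.
Proof.
exists (fun h => cast_ord eH (enum_rank h)) => i; rewrite /hJ.
  by rewrite enum_valK cast_ordKV.
by rewrite cast_ordK enum_rankK.
Qed.

Lemma sum_sI (F : 'I_D -> R) : \sum_(i : 'I_D) F i = \sum_(s : S) F (sI s).
Proof. by apply: (reindex sI); apply: onW_bij; exists sJ; [exact: sIK|exact: sJK]. Qed.

Variables (w1 : H -> S -> R) (b1 : H -> R) (w2 : S -> H -> R) (b2 : S -> R).

Definition mkFCN : FCN R D :=
  {| W1 := \matrix_(h, j) w1 (hJ h) (sJ j); B1 := \col_h b1 (hJ h);
     W2 := \matrix_(i, h) w2 (sJ i) (hJ h); B2 := \col_i b2 (sJ i) |}.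

Lemma mkFCN_E X s : fcn mkFCN X (sI s) 0 =
  \sum_(h : H) w2 s h * Num.max (\sum_(s' : S) w1 h s' * X (sI s') 0 + b1 h) 0 + b2 s.
Proof.
rewrite /fcn /relu /= !mxE sIK; congr (_ + _).
rewrite (reindex hJ) /=; last by apply: onW_bij; exact: hJ_bij.
apply: eq_bigr => h _; rewrite !mxE sIK; congr (_ * Num.max (_ + _) _).
  rewrite sum_sI; apply: eq_bigr => s' _; by rewrite !mxE sIK.
Qed.
End MkFCN.
Section Layers.
Variable R : realType.
Variable V : finType.
Variable d : V -> nat.
Definition St := {v : V & 'I_(d v)}.
Definition DD := (\sum_(v : V) d v)%N.

Lemma card_tag (p : V -> nat) : #|{: {v : V & 'I_(p v)}}| = (\sum_(v : V) p v)%N.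
Proof.
rewrite card_tagged sumnE big_map big_enum /=; apply: eq_bigr => v _; exact: card_ord.
Qed.

Lemma eS : #|{: St}| = DD. Proof. exact: card_tag. Qed.
Definition Hl := ((St + St) + (St + St))%type.
Lemma eHl : #|{: Hl}| = (4 * DD)%N.
Proof. rewrite !card_sum eS; lia. Qed.

Lemma sum_delta (s' : St) (g : St -> R) : \sum_(s'' : St) (s' == s'')%:R * g s'' = g s'.
Proof.
rewrite (bigD1 s') //= eqxx mul1r big1 ?addr0 // => s'' ne.
by rewrite eq_sym (negbTE ne) mul0r.
Qed.

Notation sIS := (@sI _ _ eS).

Definition linFCN (c : St -> St -> R) : FCN R DD :=
  mkFCN eS eHl
    (fun h s => match h with inl (inl s') => (s' == s)%:R | inl (inr s') => - (s' == s)%:R | _ => 0 end)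
    (fun _ => 0)
    (fun s h => match h with inl (inl s') => c s s' - (s == s')%:R
                  | inl (inr s') => - (c s s' - (s == s')%:R) | _ => 0 end)
    (fun _ => 0).

Lemma linE c X s : (X + fcn (linFCN c) X) (sIS s) 0 = \sum_(s' : St) c s s' * X (sIS s') 0.
Proof.
rewrite mxE /linFCN mkFCN_E !big_sumType /=.
have E0 : forall (F : St -> R), \sum_(i : St) 0 * F i = 0.
  by move=> F; rewrite big1 // => i _; rewrite mul0r.
rewrite !E0 !addr0.
have -> : \sum_(s' : St) c s s' * X (sIS s') 0 =
   \sum_(s' : St) (c s s' - (s == s')%:R) * X (sIS s') 0 + X (sIS s) 0.
  rewrite -[in RHS](sum_delta s (fun s' => X (sIS s') 0)) -big_split /=.
  by apply: eq_bigr => s' _; rewrite mulrBl subrK.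
rewrite addrC; congr (_ + _); rewrite -big_split /=; apply: eq_bigr => s' _.
rewrite sum_delta.
have -> : \sum_(s'' : St) - (s' == s'')%:R * X (sI eS s'') 0 = - X (sIS s') 0.
  by rewrite -(sum_delta s' (fun s'' => X (sIS s'') 0)) -sumrN; apply: eq_bigr => s'' _; rewrite mulNr.
by rewrite !addr0 mulNr -mulrBr maxE.
Qed.

Lemma sum_tag (J : V -> finType) (F : {v : V & J v} -> R) :
  \sum_(p : {v : V & J v}) F p = \sum_(w : V) \sum_(j : J w) F (Tagged J j).
Proof.
rewrite (sig_big_dep predT (fun _ => predT) (fun w j => F (Tagged J j))) /=.
by apply: eq_bigr; case.
Qed.

Definition Hp := {v : V & 'I_(4 * d v)}.
Lemma eHp : #|{: Hp}| = (4 * DD)%N.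
Proof. by rewrite card_tag /DD big_distrr. Qed.

Definition rowget m n (M : 'M[R]_(m, n)) (i : 'I_m) (k : nat) : R :=
  match (insub k : option 'I_n) with Some j => M i j | None => 0 end.

Lemma rowget_val m n (M : 'M[R]_(m, n)) i (j : 'I_n) : rowget M i (val j) = M i j.
Proof. by rewrite /rowget valK. Qed.

Definition parFCN (q : forall v, FCN R (d v)) : FCN R DD :=
  mkFCN eS eHp
   (fun (h : Hp) (s : St) => if tag s == tag h then rowget (W1 (q (tag h))) (tagged h) (val (tagged s)) else 0)
   (fun (h : Hp) => B1 (q (tag h)) (tagged h) 0)
   (fun (s : St) (h : Hp) => if tag h == tag s then rowget (W2 (q (tag s))) (tagged s) (val (tagged h)) else 0)
   (fun (s : St) => B2 (q (tag s)) (tagged s) 0).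

Definition blk v (X : 'cV[R]_DD) : 'cV[R]_(d v) := \col_i X (sIS (Tagged (fun w => 'I_(d w)) i)) 0.

Lemma parE q X v : blk v (X + fcn (parFCN q) X) = blk v X + fcn (q v) (blk v X).
Proof.
apply/matrixP => i j; rewrite (ord1 j).
transitivity (X (sIS (Tagged (fun w => 'I_(d w)) i)) 0 + fcn (parFCN q) X (sIS (Tagged (fun w => 'I_(d w)) i)) 0).
  by rewrite !mxE.
rewrite [RHS]mxE; congr (_ + _); first by rewrite mxE.
rewrite /parFCN mkFCN_E /= /fcn [RHS]mxE; congr (_ + _).
rewrite mxE.
rewrite sum_tag (bigD1 v) //= [X in _ + X]big1 ?addr0; last first.
  move=> w wv; apply: big1 => k _ /=; by rewrite (negbTE wv) mul0r.
apply: eq_bigr => k _ /=; rewrite eqxx rowget_val !mxE; congr (_ * Num.max (_ + _) _).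
rewrite sum_tag (bigD1 v) //= [X in _ + X]big1 ?addr0; last first.
  move=> w wv; apply: big1 => l _ /=; by rewrite (negbTE wv) mul0r.
by apply: eq_bigr => l _ /=; rewrite eqxx rowget_val !mxE.
Qed.

End Layers.
Section GraphL.
Variable V : finType.
Variable preds : V -> seq V.

Lemma path_uniq x t : acyclic preds -> path (edge preds) x t -> uniq (x :: t).
Proof.
move=> ac; elim: t x => //= y t IH x /andP [exy pyt].
rewrite IH // andbT; apply/negP => xyt.
have := ac _ _ exy; rewrite (path_connect pyt) //.
Qed.

Fixpoint cl (k : nat) (v : V) : bool :=
  match k with 0 => is_source preds v | k'.+1 => is_source preds v || all (cl k') (preds v) end.

Lemma cl_src k v : is_source preds v -> cl k v.
Proof. by case: k => /= [|k] ->. Qed.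

Lemma notcl_path k v : ~~ cl k v ->
  exists x (t : seq V), size t = k.+1 /\ path (edge preds) x t /\ last x t = v.
Proof.
elim: k v => [|k IH] v /=.
  rewrite /is_source; case E: (preds v) => [|u s] // _.
  exists u, [:: v]; split => //=; rewrite andbT /edge E inE eqxx //.
rewrite negb_or => /andP [_ /allPn [u up /IH [x [t [st [pt lt]]]]]].
exists x, (rcons t v); rewrite size_rcons st last_rcons rcons_path pt lt; split => //.
Qed.

Lemma all_cl v : acyclic preds -> cl (depth preds) v.
Proof.
move=> ac; apply/negP => /negP /notcl_path [x [t [st [pt _]]]].
have U := path_uniq ac pt.
have sz : (size (x :: t) <= #|V|)%N by rewrite -(card_uniqP U) max_card.
have Hn : ((depth preds).+1 < #|V|.+1)%N by rewrite /= st in sz; rewrite ltnS; exact: ltnW.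
have := @leq_bigmax_cond _ (fun n : 'I_#|V|.+1 => [exists x : V, [exists t : n.-tuple V, path (edge preds) x t]]) (fun n => val n) (Ordinal Hn).
rewrite /depth => H.
have : ((depth preds).+1 <= depth preds)%N; last by rewrite ltnn.
apply: H; apply/existsP; exists x; apply/existsP.
have st' : size t == (depth preds).+1 by rewrite st.
by exists (Tuple st').
Qed.
End GraphL.
Section Res.
Variable R : realType.

Definition zFCN n : FCN R n := {| W1 := 0; B1 := 0; W2 := 0; B2 := 0 |}.
Lemma fcn_z n (X : 'cV[R]_n) : fcn (zFCN n) X = 0.
Proof. by rewrite /fcn /= mul0mx addr0. Qed.

Lemma resmlp_cat n (l1 l2 : seq (FCN R n)) X : resmlp (l1 ++ l2) X = resmlp l2 (resmlp l1 X).
Proof. by rewrite /resmlp foldl_cat. Qed.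

Lemma resmlp_cons n (p : FCN R n) l X : resmlp (p :: l) X = resmlp l (X + fcn p X).
Proof. by []. Qed.

Lemma resmlp_nseqz n m X : resmlp (nseq m (zFCN n)) X = X.
Proof.
elim: m X => // m IH X; change (resmlp (zFCN n :: nseq m (zFCN n)) X = X).
by rewrite resmlp_cons fcn_z addr0 IH.
Qed.

Lemma resmlp_padz n (ls : seq (FCN R n)) m Y : (size ls <= m)%N ->
  resmlp [seq nth (zFCN n) ls j | j <- iota 0 m] Y = resmlp ls Y.
Proof.
move=> sm; rewrite -(subnKC sm) iotaD map_cat resmlp_cat.
have -> : [seq nth (zFCN n) ls j | j <- iota 0 (size ls)] = ls.
  by rewrite -{3}(mkseq_nth (zFCN n) ls).
have -> : [seq nth (zFCN n) ls j | j <- iota (0 + size ls) (m - size ls)] = nseq (m - size ls) (zFCN n).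
  apply: (@eq_from_nth _ (zFCN n)); rewrite size_map size_iota ?size_nseq // => i im.
  rewrite (nth_map 0%N) ?size_iota // nth_iota // nth_nseq im nth_default //; lia.
by rewrite resmlp_nseqz.
Qed.
End Res.
Lemma par_stack (R : realType) (V : finType) (d : V -> nat) (qs : nat -> forall v, FCN R (d v))
  js (X : 'cV[R]_(DD d)) v :
  blk v (resmlp [seq parFCN (qs j) | j <- js] X) = resmlp [seq qs j v | j <- js] (blk v X).
Proof.
elim: js X => // j js IH X.
by rewrite map_cons resmlp_cons IH parE map_cons resmlp_cons.
Qed.

Lemma size_flat_nseq (A : Type) (s : seq A) m : size (flatten (nseq m s)) = (m * size s)%N.
Proof. by elim: m => //= m IH; rewrite size_cat IH mulSn. Qed.

Section Main.
Variables (R : realType) (V : finType) (preds : V -> seq V) (T : V -> LocalType R)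
  (f : forall v, (forall u, lt_car (T u)) -> lt_car (T v))
  (srcs snks : seq V) (d L : V -> nat).
Hypothesis ac : acyclic preds.
Hypothesis usrcs : uniq srcs.
Hypothesis srcsE : forall v, (v \in srcs) = is_source preds v.
Hypothesis usnks : uniq snks.
Hypothesis srcd : forall v, is_source preds v -> d v = lt_dim (T v) /\ L v = 0%N.
Hypothesis rep : forall v, ~~ is_source preds v ->
     representable (fun _ => True) (@encs R V T (preds v)) (fun x => lt_enc (f v x)) (d v) (L v).

Local Notation D := (DD d).
Local Notation S := (St d).
Local Notation sx := (sI (eS d)).

Lemma ltd v : (lt_dim (T v) <= d v)%N.
Proof.
case: (boolP (is_source preds v)) => h; first by rewrite (srcd h).1.
by case: (rep h) => _ [].
Qed.

Lemma dims_le s : uniq s -> (dims T s <= D)%N.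
Proof.
move=> us; rewrite dims_sum /DD; apply: (@leq_trans (\sum_(u <- s) d u)).
  by apply: leq_sum => u _; exact: ltd.
rewrite big_uniq // [X in (_ <= X)%N](bigID (fun u => u \in s)) /=; exact: leq_addr.
Qed.

Lemma LSv v : {ls : seq (FCN R (d v)) | (is_source preds v -> ls = [::]) /\
  (~~ is_source preds v -> size ls = L v /\
     forall x, pad (d v) (lt_enc (f v x)) = resmlp ls (pad (d v) (encs (preds v) x)))}.
Proof.
apply: constructive_indefinite_description.
case: (boolP (is_source preds v)) => h; first by exists [::]; split.
case: (rep h) => _ [_ [g [[ls [sz gE]] H]]]; exists ls; split => // _; split => // x.
by rewrite H // gE.
Qed.

Definition lsv v := sval (LSv v).
Definition M := (\max_(v : V) L v)%N.

Lemma lsv_size v : (size (lsv v) <= M)%N.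
Proof.
rewrite /lsv; case: (LSv v) => ls [h1 h2] /=.
case: (boolP (is_source preds v)) => h; first by rewrite h1.
by rewrite (h2 h).1; exact: leq_bigmax.
Qed.

Definition qs (j : nat) (v : V) : FCN R (d v) := nth (zFCN R (d v)) (lsv v) j.
Definition par_ls := [seq parFCN (qs j) | j <- iota 0 M].

Definition c_init (s s'' : S) : R :=
  if tag s \in srcs then (val (sx s'') == posn T srcs (tag s) (val (tagged s)))%:R else 0.
Definition c_copy (s s' : S) : R :=
  if is_source preds (tag s) then (s == s')%:R else
  match unpos T (preds (tag s)) (val (tagged s)) with
  | Some (u, k) => ((tag s' == u) && (val (tagged s') == k))%:R | None => 0 end.
Definition c_fin (s s' : S) : R :=
  match unpos T snks (val (sx s)) with
  | Some (u, k) => ((tag s' == u) && (val (tagged s') == k))%:R | None => 0 end.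
Definition comp (c1 c2 : S -> S -> R) s s'' := \sum_(s' : S) c1 s s' * c2 s' s''.

Lemma lin_comp c1 c2 (X : 'cV[R]_D) :
  X + fcn (linFCN (comp c1 c2)) X =
  let Y := X + fcn (linFCN c2) X in Y + fcn (linFCN c1) Y.
Proof.
apply/matrixP => i j; rewrite (ord1 j) -(sJK (eS d) i) /= !linE.
rewrite /comp; under eq_bigr do rewrite mulr_suml.
rewrite exchange_big /=; apply: eq_bigr => s' _; rewrite linE mulr_sumr.
by apply: eq_bigr => s'' _; rewrite mulrA.
Qed.

Lemma sumS1 (X : 'cV[R]_D) n : \sum_(s'' : S) (val (sx s'') == n)%:R * X (sx s'') 0 = getc X n.
Proof.
rewrite -(sum_sI (eS d) (fun i => (val i == n)%:R * X i 0)) -sum_getc.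
by apply: eq_bigr => i _; case: eqP; rewrite ?mul1r ?mul0r.
Qed.

Lemma sumS2 (X : 'cV[R]_D) u k :
  \sum_(s' : S) ((tag s' == u) && (val (tagged s') == k))%:R * X (sx s') 0 = getc (blk u X) k.
Proof.
rewrite sum_tag (bigD1 u) //= [X in _ + X]big1 ?addr0; last first.
  by move=> w wu; apply: big1 => l _ /=; rewrite (negbTE wu) mul0r.
rewrite -sum_getc; apply: eq_bigr => j _ /=; rewrite eqxx /= mxE.
by case: eqP; rewrite ?mul1r ?mul0r.
Qed.

Lemma sum0 (g : S -> R) : \sum_(s' : S) 0 * g s' = 0.
Proof. by rewrite big1 // => s' _; rewrite mul0r. Qed.


Definition Inv (a : forall u, lt_car (T u)) k (X : 'cV[R]_D) :=
  forall v, cl preds k v -> blk v X = pad (d v) (lt_enc (a v)).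

Lemma getc_blk (a : forall u, lt_car (T u)) u (X : 'cV[R]_D) k :
  blk u X = pad (d u) (lt_enc (a u)) -> getc (blk u X) k = getc (lt_enc (a u)) k.
Proof. by move=> ->; rewrite getc_pad // ltd. Qed.

Lemma inv0 (a : forall u, lt_car (T u)) : Inv a 0 (let raw := pad D (encs srcs a) in raw + fcn (linFCN c_init) raw).
Proof.
move=> v /= vs; apply/matrixP => i j; rewrite (ord1 j) mxE linE /c_init /= srcsE vs.
rewrite sumS1 getc_pad ?dims_le // getc_encs_posn ?srcsE //; last by rewrite -(srcd vs).1.
by rewrite padE.
Qed.

Lemma copy_src (X : 'cV[R]_D) v : is_source preds v ->
  blk v (X + fcn (linFCN c_copy) X) = blk v X.
Proof.
move=> vs; apply/matrixP => i j; rewrite (ord1 j) [LHS]mxE [RHS]mxE linE /c_copy /= vs.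
exact: (sum_delta (Tagged (fun w => 'I_(d w)) i) (fun s' => X (sx s') 0)).
Qed.

Lemma copy_ns (a : forall u, lt_car (T u)) (X : 'cV[R]_D) v : ~~ is_source preds v ->
  (forall u, u \in preds v -> blk u X = pad (d u) (lt_enc (a u))) ->
  blk v (X + fcn (linFCN c_copy) X) = pad (d v) (encs (preds v) a).
Proof.
move=> vs Hu; apply/matrixP => i j; rewrite (ord1 j) [LHS]mxE padE linE /c_copy /= (negbTE vs).
rewrite getc_encs_unpos; case E: (unpos T (preds v) i) => [[u k]|]; last exact: sum0.
by rewrite sumS2 (getc_blk _ (Hu _ (unpos_mem E))).
Qed.

Lemma stage (a : forall u, lt_car (T u)) k (X : 'cV[R]_D) : run preds f a -> Inv a k X ->
  Inv a k.+1 (resmlp (linFCN c_copy :: par_ls) X).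
Proof.
move=> ra IX v clv; rewrite resmlp_cons /par_ls par_stack.
rewrite (resmlp_padz _ (lsv_size v)).
rewrite /lsv; case: (LSv v) => ls [h1 h2] /=.
case: (boolP (is_source preds v)) => vs.
  by rewrite h1 // copy_src // IX // cl_src.
have := clv; rewrite /= (negbTE vs) /= => /allP Hp.
rewrite (copy_ns (a:=a) vs) => [|u up]; last exact: IX (Hp u up).
by rewrite -(h2 vs).2 (ra v vs).
Qed.

Lemma stages (a : forall u, lt_car (T u)) n k (X : 'cV[R]_D) : run preds f a -> Inv a k X ->
  Inv a (k + n) (resmlp (flatten (nseq n (linFCN c_copy :: par_ls))) X).
Proof.
move=> ra; elim: n k X => [|n IH] k X IX; first by rewrite addn0.
rewrite /= resmlp_cat addnS -addSn; apply: IH; exact: stage.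
Qed.

Lemma fin (a : forall u, lt_car (T u)) (X : 'cV[R]_D) : (forall v, blk v X = pad (d v) (lt_enc (a v))) ->
  X + fcn (linFCN c_fin) X = pad D (encs snks a).
Proof.
move=> HX; apply/matrixP => i j; rewrite (ord1 j) -(sJK (eS d) i) linE padE /c_fin.
rewrite getc_encs_unpos; case: (unpos T snks _) => [[u k]|]; last exact: sum0.
by rewrite sumS2 (getc_blk _ (HX u)).
Qed.

Lemma main : representable (run preds f) (@encs R V T srcs) (@encs R V T snks)
    D (depth preds * (M + 1) + 1)%N.
Proof.
split; first exact: dims_le.
split; first exact: dims_le.
case E: (depth preds) => [|m].
  exists (resmlp [:: linFCN (comp c_fin c_init)]); split.
    by exists [:: linFCN (comp c_fin c_init)].
  move=> a ra; rewrite resmlp_cons /= lin_comp /=; symmetry; apply: fin => v.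
  apply: inv0; have := all_cl v ac; by rewrite E.
set stg := linFCN c_copy :: par_ls.
set ls := linFCN (comp c_copy c_init) :: par_ls ++ flatten (nseq m stg) ++ [:: linFCN c_fin].
exists (resmlp ls); split.
  exists ls; split => //; rewrite /ls /= !size_cat size_flat_nseq /stg /= /par_ls size_map size_iota.
  lia.
move=> a ra; rewrite /ls resmlp_cons lin_comp /=.
set Y := _ + fcn (linFCN c_init) _.
rewrite (_ : resmlp (par_ls ++ _) _ = resmlp (flatten (nseq m.+1 stg) ++ [:: linFCN c_fin]) Y); last first.
  by rewrite [flatten _]/= -catA.
rewrite resmlp_cat.
symmetry; apply: fin => v; apply: (stages (k := 0) ra (inv0 a)).
by rewrite add0n -E all_cl.
Qed.
End Main.

Unset Implicit Arguments.
Theorem proposition12 (R : realType) (V : finType) (preds : V -> seq V)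
  (T : V -> LocalType R)
  (f : forall v, (forall u, lt_car (T u)) -> lt_car (T v))
  (srcs snks : seq V) (d L : V -> nat) :
  (forall v, uniq (preds v)) ->
  acyclic preds ->
  uniq srcs -> (forall v, (v \in srcs) = is_source preds v) ->
  uniq snks -> (forall v, (v \in snks) = is_sink preds v) ->
  (forall v, ~~ is_source preds v -> local preds (f v)) ->
  (forall v, is_source preds v -> d v = lt_dim (T v) /\ L v = 0%N) ->
  (forall v, ~~ is_source preds v ->
     representable (fun _ => True) (@encs R V T (preds v)) (fun x => lt_enc (f v x))
       (d v) (L v)) ->
  representable (run preds f) (@encs R V T srcs) (@encs R V T snks)
    (\sum_(v : V) d v)%N
    (depth preds * (\max_(v : V) L v + 1) + 1)%N.
Proof.
move=> _ ac us sE un _ _ sd rp; apply: main => //.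
Qed.
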